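(* Let $f:\mathbb{R}^n\to\mathbb{R}$ be differentiable, $\mu$-strongly convex, with $L$-Lipschitz gradient $\nabla f$, and let $x^*$ be its unique minimizer. Let $\mathcal{E}^t$ denote the event $\|\nabla f(x^t)\|_\infty\le\eta$. Then the iterate $x^{t+1}$ of Markov gradient descent satisfies $$\mathbb{E}\left[\|x^{t+1}-x^*\|_2^2\,\middle|\,x^t,\mathcal{E}^t\right]\le\Big(1-\frac{2\alpha\mu}{\eta}\Big)\|x^t-x^*\|_2^2+\frac{L\alpha^2\sqrt{n}}{\eta}\|x^t-x^*\|_2 .$$
   Context: A differentiable $f$ is $\mu$-strongly convex if $\langle\nabla f(x)-\nabla f(y),x-y\rangle\ge\mu\|x-y\|_2^2$ for all $x,y$. Markov gradient descent (MGD) with lattice resolution $\alpha>0$ and normalizer $\eta>0$: start at $x^0\in\alpha\mathbb{Z}^n$; at step $t$, for each coordinate $i$, conditionally on $x^t$, $\Delta^t_i\in\{0,1\}$ is Bernoulli with $\mathbb{P}[\Delta^t_i=1\mid x^t]=\min(|\partial_i f(x^t)|/\eta,1)$, and $x^{t+1}_i=x^t_i-\alpha\,\mathrm{sgn}(\partial_i f(x^t))\Delta^t_i$. *)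

(* Defs.v *)
From HB Require Import structures.
From mathcomp Require Import all_boot all_order all_algebra.
From mathcomp Require Import all_classical all_reals all_analysis.
Set Implicit Arguments. Unset Strict Implicit. Unset Printing Implicit Defensive.
Import Order.TTheory GRing.Theory Num.Theory.
Import numFieldNormedType.Exports.
Local Open Scope ring_scope.

Definition dotv {R : realType} {n : nat} (u v : 'rV[R]_n) : R :=
  \sum_(i < n) u 0 i * v 0 i.
Definition norm2sq {R : realType} {n : nat} (u : 'rV[R]_n) : R := dotv u u.
Definition norm2 {R : realType} {n : nat} (u : 'rV[R]_n) : R := Num.sqrt (norm2sq u).
Definition norminf {R : realType} {n : nat} (u : 'rV[R]_n) : R :=
  \big[Num.max/0]_(i < n) `|u 0 i|.

Definition grad {R : realType} {n : nat} (f : 'rV[R]_n -> R) (x : 'rV[R]_n)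
  : 'rV[R]_n := \row_i ('d f x (delta_mx 0 i : 'rV[R]_n)).

Definition strongly_convex {R : realType} {n : nat} (mu : R)
  (f : 'rV[R]_n -> R) : Prop :=
  forall x y, mu * norm2sq (x - y) <= dotv (grad f x - grad f y) (x - y).

Definition lipschitz_grad {R : realType} {n : nat} (L : R)
  (f : 'rV[R]_n -> R) : Prop :=
  forall x y, norm2 (grad f x - grad f y) <= L * norm2 (x - y).

Definition on_lattice {R : realType} {n : nat} (alpha : R) (x : 'rV[R]_n) : Prop :=
  exists z : 'I_n -> int, forall i, x 0 i = (z i)%:~R * alpha.

Definition mgd_step {R : realType} {n : nat} (f : 'rV[R]_n -> R) (alpha : R)
  (x : 'rV[R]_n) (d : {ffun 'I_n -> bool}) : 'rV[R]_n :=
  \row_i (x 0 i - alpha * Num.sg (grad f x 0 i) * (d i)%:R).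

(* p is a conditional law (pmf on {0,1}^n) of the coin vector Delta^t given
   x^t = x, whose marginals are the MGD Bernoulli laws. The joint law across
   coordinates is left arbitrary (the paper only specifies marginals). *)
Definition mgd_law {R : realType} {n : nat} (f : 'rV[R]_n -> R) (eta : R)
  (x : 'rV[R]_n) (p : {ffun 'I_n -> bool} -> R) : Prop :=
  (forall d, 0 <= p d) /\ (\sum_(d : {ffun 'I_n -> bool}) p d = 1) /\
  (forall i, \sum_(d : {ffun 'I_n -> bool} | d i) p d = Num.min (`|grad f x 0 i| / eta) 1).

(* Expectation of g(x^{t+1}) under the law p given x^t = x. *)
Definition mgd_expect {R : realType} {n : nat} (f : 'rV[R]_n -> R) (alpha : R)
  (x : 'rV[R]_n) (p : {ffun 'I_n -> bool} -> R) (g : 'rV[R]_n -> R) : R :=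
  \sum_(d : {ffun 'I_n -> bool}) p d * g (mgd_step f alpha x d).

(* Main.v *)
Require Import Defs.
From HB Require Import structures.
From mathcomp Require Import all_boot all_order all_algebra.
From mathcomp Require Import all_classical all_reals all_analysis.
From mathcomp Require Import ring lra.
Import Order.TTheory GRing.Theory Num.Theory.
Local Open Scope ring_scope.

Lemma cs_sum (R : realType) (n : nat) (a : 'I_n -> R) :
  (\sum_i a i) ^+ 2 <= n%:R * \sum_i a i ^+ 2.
Proof.
have H : 0 <= \sum_i \sum_j (a i - a j) ^+ 2.
  by apply: sumr_ge0 => i _; apply: sumr_ge0 => j _; exact: sqr_ge0.
have E : \sum_i \sum_j (a i - a j) ^+ 2 = 2 * (n%:R * \sum_i a i ^+ 2 - (\sum_i a i) ^+ 2).
  under eq_bigr do under eq_bigr do rewrite sqrrB.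
  under eq_bigr do rewrite !big_split /= sumrN -mulr_sumr sumr_const card_ord -mulr_natl.
  rewrite !big_split /= sumrN sumr_const card_ord -mulr_natl.
  have T1 : \sum_i a i * (n%:R * 1 * a i) = n%:R * \sum_i a i ^+ 2.
    by rewrite mulr_sumr; apply: eq_bigr => i _; ring.
  have T2 : \sum_i \sum_j a i * a j *+ 2 = (\sum_i a i) ^+ 2 *+ 2.
    rewrite expr2 big_distrl -sumrMnl; apply: eq_bigr => i _ /=.
    by rewrite big_distrr -sumrMnl.
  rewrite T1 T2 -mulr_natl; ring.
move: H; rewrite E; lra.
Qed.

Lemma sum_abs_le (R : realType) (n : nat) (g : 'rV[R]_n) :
  \sum_i `|g 0 i| <= Num.sqrt n%:R * norm2 g.
Proof.
rewrite /norm2 /norm2sq /dotv -sqrtrM ?ler0n //.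
have h0 : 0 <= \sum_i `|g 0 i| by apply: sumr_ge0 => i _; exact: normr_ge0.
rewrite -(ger0_norm h0) -sqrtr_sqr ler_wsqrtr //.
have -> : \sum_i g 0 i * g 0 i = \sum_i `|g 0 i| ^+ 2.
  by apply: eq_bigr => i _; rewrite real_normK ?num_real // expr2.
exact: cs_sum.
Qed.

Lemma expect_eq (R : realType) (n : nat) (f : 'rV[R]_n -> R) (alpha eta : R)
  (x xs : 'rV[R]_n) (p : {ffun 'I_n -> bool} -> R) :
  0 < eta -> mgd_law f eta x p -> (forall i, `|grad f x 0 i| <= eta) ->
  mgd_expect f alpha x p (fun y => norm2sq (y - xs)) =
  norm2sq (x - xs) + alpha ^+ 2 / eta * \sum_i `|grad f x 0 i|
   - 2 * alpha / eta * dotv (grad f x) (x - xs).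
Proof.
move=> eta0 [p0 [p1 pm]] gle.
set g := grad f x.
pose u i := x 0 i - xs 0 i.
pose c i := alpha ^+ 2 * Num.sg (g 0 i) ^+ 2 - 2 * alpha * Num.sg (g 0 i) * u i.
have qE : forall i, \sum_(d : {ffun 'I_n -> bool} | d i) p d = `|g 0 i| / eta.
  move=> i; rewrite pm; apply/min_idPl.
  by rewrite ler_pdivrMr // mul1r.
rewrite /mgd_expect /norm2sq /dotv.
transitivity (\sum_(d : {ffun 'I_n -> bool}) \sum_i p d * (u i * u i + (d i)%:R * c i)).
  apply: eq_bigr => d _; rewrite mulr_sumr; apply: eq_bigr => i _.
  rewrite /c /u /g !mxE; case: (d i) => /=; ring.
rewrite exchange_big /=.
transitivity (\sum_i (u i * u i + c i * (`|g 0 i| / eta))).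
  apply: eq_bigr => i _; under eq_bigr do rewrite mulrDr.
  rewrite big_split /= -mulr_suml p1 mul1r -qE.
  congr (_ + _); rewrite mulr_sumr [RHS]big_mkcond /=; apply: eq_bigr => d _.
  by case: (d i) => /=; rewrite ?mul0r ?mulr0 ?mul1r // mulrC.
rewrite !mulr_sumr -big_split -sumrB /=.
apply: eq_bigr => i _.
have ux : (x - xs) 0 i = u i by rewrite !mxE.
rewrite !ux /c.
have s2 : Num.sg (g 0 i) ^+ 2 * `|g 0 i| = `|g 0 i|.
  rewrite sqr_sg; case: eqP => [->|_]; by rewrite ?normr0 ?mulr0 ?mul1r.
have s1 := mulr_sg_norm (g 0 i).
transitivity (u i * u i + alpha ^+ 2 / eta * (Num.sg (g 0 i) ^+ 2 * `|g 0 i|)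
  - 2 * alpha / eta * ((Num.sg (g 0 i) * `|g 0 i|) * u i)); first by ring.
by rewrite s2 s1.
Qed.
Lemma grad_min (R : realType) (n : nat) (f : 'rV[R]_n -> R) (xs : 'rV[R]_n) :
  (forall y, differentiable f y) -> (forall y, f xs <= f y) -> grad f xs = 0.
Proof.
move=> df fmin; apply/rowP => i; rewrite !mxE.
set v : 'rV[R]_n := delta_mx 0 i.
rewrite -deriveE //.
pose h := fun t : R => f (t *: v + xs).
have eqq : forall t : R, (fun s : R => s^-1 *: ((h \o shift t) (s *: (1:R)) - h t)) =
   (fun s : R => s^-1 *: ((f \o shift (t *: v + xs)) (s *: v) - f (t *: v + xs))).
  move=> t; apply/funext => s /=; rewrite /h /=.
  have -> : (s *: (1:R)) = s by apply: mulr1.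
  by rewrite scalerDl addrA.
have dh : forall t, derivable h t 1.
  move=> t; rewrite /derivable eqq; exact: diff_derivable.
have := @derive1_at_min R h (-1) 1 0.
case.
- by apply: (@le_trans _ _ 0); rewrite ?lerN10 ?ler01.
- by move=> t _; exact: dh.
- by rewrite in_itv /= ltrN10 ltr01.
- by move=> t _; rewrite /h scale0r add0r; exact: fmin.
- move=> _ <-; rewrite /derive eqq /= scale0r add0r //.
Qed.

Theorem corollary6p4 (R : realType) (n : nat) (f : 'rV[R]_n -> R)
  (mu L alpha eta : R) (xstar x : 'rV[R]_n) (p : {ffun 'I_n -> bool} -> R) :
  0 < mu -> 0 <= L -> 0 < alpha -> 0 < eta ->
  (forall y, differentiable f y) ->
  strongly_convex mu f ->
  lipschitz_grad L f ->
  (forall y, f xstar <= f y) ->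
  on_lattice alpha x ->
  mgd_law f eta x p ->
  norminf (grad f x) <= eta ->
  mgd_expect f alpha x p (fun y => norm2sq (y - xstar))
    <= (1 - 2 * alpha * mu / eta) * norm2sq (x - xstar)
       + L * alpha ^+ 2 * Num.sqrt (n%:R) / eta * norm2 (x - xstar).
Proof.
move=> mu0 L0 a0 e0 df sc lg fmin _ law ginf.
have gs := @grad_min R n f xstar df fmin.
have gle : forall i, `|grad f x 0 i| <= eta.
  by move=> i; apply: le_trans ginf; rewrite /norminf; exact: (le_bigmax 0 (fun i => `|grad f x 0 i|) i).
rewrite (@expect_eq R n f alpha eta x xstar p e0 law gle).
have D := sc x xstar; rewrite gs subr0 in D.
have G := lg x xstar; rewrite gs subr0 in G.
have S := @sum_abs_le R n (grad f x).
set N := norm2sq (x - xstar) in D *.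
set nu := norm2 (x - xstar) in G *.
set Dt := dotv (grad f x) (x - xstar) in D *.
set S1 := \sum_i `|grad f x 0 i| in S *.
set q := Num.sqrt n%:R in S *.
have q0 : 0 <= q by exact: sqrtr_ge0.
have k0 : 0 < alpha / eta by exact: divr_gt0.
have h1 : 0 <= alpha / eta * (Dt - mu * N) by apply: mulr_ge0; rewrite ?subr_ge0 // ltW.
have h2 : S1 <= q * (L * nu) by apply: le_trans S (ler_wpM2l q0 G).
have h3 : 0 <= alpha * (alpha / eta) * (q * (L * nu) - S1).
  by apply: mulr_ge0; rewrite ?subr_ge0 // mulr_ge0 // ltW.
rewrite -subr_ge0.
have -> : (1 - 2 * alpha * mu / eta) * N + L * alpha ^+ 2 * q / eta * nu -
   (N + alpha ^+ 2 / eta * S1 - 2 * alpha / eta * Dt) =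
   2 * (alpha / eta * (Dt - mu * N)) + alpha * (alpha / eta) * (q * (L * nu) - S1) by ring.
by apply: addr_ge0 => //; apply: mulr_ge0.
Qed.
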